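(* Let $q\in\mathbb{C}^\times$ be not a root of unity, $Q\in\mathbb{C}^\times$, $\varphi\in\mathbb{C}[x]^{\langle Q\rangle}$, and let $v_0$ be a highest weight vector of the $U_q(\mathfrak{sl}_2^{\langle Q\rangle}[x])$-module $L(\mathbf{u}^{\langle Q\rangle}(\varphi))$. Then, as formal Laurent series in $w$, $$\Psi^+(w)\cdot v_0=q^{\deg\varphi}\frac{\varphi^\flat(q^{-2}w)}{\varphi^\flat(w)}\big(\beta_\varphi^{-1}-Q\beta_\varphi w^{-1}\big)v_0.$$
   Context: $[k]=(q^k-q^{-k})/(q-q^{-1})$, $[x,y]=xy-yx$. $U_q(\mathfrak{sl}_2^{\langle Q\rangle}[x])$ is the $\mathbb{C}$-algebra with generators $X^\pm_t,J_t$ ($t\ge0$), $K^\pm$ and relations: $K^+$ and all $J_t$ pairwise commute; $K^+K^-=1=K^-K^+$; $(K^-)^2=1-(q-q^{-1})J_0$; $X^\pm_{t+1}X^\pm_s-q^{\pm2}X^\pm_sX^\pm_{t+1}=q^{\pm2}X^\pm_tX^\pm_{s+1}-X^\pm_{s+1}X^\pm_t$; $K^+X^\pm_tK^-=q^{\pm2}X^\pm_t$; $q^{\pm2}J_0X^\pm_t-q^{\mp2}X^\pm_tJ_0=\pm[2]X^\pm_t$; $[J_{s+1},X^\pm_t]=q^{\pm2}J_sX^\pm_{t+1}-q^{\mp2}X^\pm_{t+1}J_s$; $[X^+_t,X^-_s]=K^+(J_{s+t}-QJ_{s+t+1})$. Elements: $\Psi^+_{-1}=-QK^+$, $\Psi^+_0=K^+-(q-q^{-1})QK^+J_1$,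 $\Psi^+_t=(q-q^{-1})K^+(J_t-QJ_{t+1})$ for $t>0$; $\Psi^+(w)=\sum_{t\ge-1}\Psi^+_tw^t$. For $\mathbf{u}=(\lambda,(u_t)_{t>0})$, $L(\mathbf{u})$ is the simple module generated by a highest weight vector $v_0$: $X^+_tv_0=0$, $K^+v_0=\lambda v_0$, $J_tv_0=u_tv_0$ ($t>0$). With $p_t(q)(x_1,\dots,x_k)=\sum_{\lambda\vdash t,\ell(\lambda)\le k}q^{-\ell(\lambda)}(q-q^{-1})^{\ell(\lambda)-1}m_\lambda(x_1,\dots,x_k)$, $\tilde\beta=(q-q^{-1})^{-1}(1-\beta^{-2})$ and $p^{\langle Q\rangle}_t(q;\beta)=p_t(q)+\tilde\beta Q^{-t}+(q-q^{-1})\sum_{z=1}^{t-1}\tilde\beta Q^{-t+z}p_z(q)$: for nonzero $\varphi=\beta_\varphi(x-\gamma_1)\cdots(x-\gamma_k)$, $\mathbf{u}^{\langle Q\rangle}(\varphi)=(\beta_\varphi,(\tilde\beta_\varphi Q^{-t})_{t>0})$ if $k=0$ and $(\beta_\varphi q^k,(p^{\langle Q\rangle}_t(q;\beta_\varphi)(\gamma_1,\dots,\gamma_k))_{t>0})$ if $k>0$. $\mathbb{C}[x]^{\langle Q\rangle}=\{\varphi\ne0:\beta_\varphi^{-2}Q^{-1}\text{ not a root of }\varphi\}$. $\varphi^\flat(w)=(1-\gamma_1w)\cdots(1-\gamma_kw)$. *)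

(* Defs.v *)
From mathcomp Require Import all_boot all_algebra.
From mathcomp Require Import complex Rstruct.
Set Implicit Arguments. Unset Strict Implicit. Unset Printing Implicit Defensive.
Import GRing.Theory.
Local Open Scope ring_scope.

Definition C : fieldType := (Rdefinitions.R)[i].

Definition qint (q : C) (k : nat) : C := (q ^+ k - q ^- k) / (q - q^-1).

(* Modules over U_q(sl_2^<Q>[x]):  a C-vector space V with linear     *)
(* operators X^+_t, X^-_t, J_t (t >= 0), K^+, K^- satisfying the       *)
(* defining relations (products in the algebra act as composition).    *)
Record UqModule (q Q : C) (V : lmodType C) := {
  Xp : nat -> {linear V -> V};
  Xm : nat -> {linear V -> V};
  J  : nat -> {linear V -> V};
  Kp : {linear V -> V};
  Km : {linear V -> V};
  rel_KJ : forall t v, Kp (J t v) = J t (Kp v);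
  rel_JJ : forall s t v, J s (J t v) = J t (J s v);
  rel_KpKm : forall v, Kp (Km v) = v;
  rel_KmKp : forall v, Km (Kp v) = v;
  rel_Km2 : forall v, Km (Km v) = v - (q - q^-1) *: J 0 v;
  rel_XXp : forall t s v,
    Xp t.+1 (Xp s v) - q ^+ 2 *: Xp s (Xp t.+1 v)
    = q ^+ 2 *: Xp t (Xp s.+1 v) - Xp s.+1 (Xp t v);
  rel_XXm : forall t s v,
    Xm t.+1 (Xm s v) - q ^- 2 *: Xm s (Xm t.+1 v)
    = q ^- 2 *: Xm t (Xm s.+1 v) - Xm s.+1 (Xm t v);
  rel_KXp : forall t v, Kp (Xp t (Km v)) = q ^+ 2 *: Xp t v;
  rel_KXm : forall t v, Kp (Xm t (Km v)) = q ^- 2 *: Xm t v;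
  rel_J0Xp : forall t v,
    q ^+ 2 *: J 0 (Xp t v) - q ^- 2 *: Xp t (J 0 v) = qint q 2 *: Xp t v;
  rel_J0Xm : forall t v,
    q ^- 2 *: J 0 (Xm t v) - q ^+ 2 *: Xm t (J 0 v) = - (qint q 2 *: Xm t v);
  rel_JXp : forall s t v,
    J s.+1 (Xp t v) - Xp t (J s.+1 v)
    = q ^+ 2 *: J s (Xp t.+1 v) - q ^- 2 *: Xp t.+1 (J s v);
  rel_JXm : forall s t v,
    J s.+1 (Xm t v) - Xm t (J s.+1 v)
    = q ^- 2 *: J s (Xm t.+1 v) - q ^+ 2 *: Xm t.+1 (J s v);
  rel_XpXm : forall t s v,
    Xp t (Xm s v) - Xm s (Xp t v) = Kp (J (s + t) v - Q *: J (s + t).+1 v)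
}.

Definition is_submodule (q Q : C) (V : lmodType C) (M : UqModule q Q V)
    (S : V -> Prop) : Prop :=
  [/\ S 0,
      (forall u v, S u -> S v -> S (u + v)),
      (forall (a : C) v, S v -> S (a *: v)),
      (forall t v, S v -> [/\ S (Xp M t v), S (Xm M t v) & S (J M t v)]) &
      (forall v, S v -> S (Kp M v) /\ S (Km M v))].

Definition simple_module (q Q : C) (V : lmodType C) (M : UqModule q Q V) : Prop :=
  (exists v : V, v != 0) /\
  forall S, is_submodule M S -> (forall v, S v -> v = 0) \/ (forall v, S v).

Definition highest_weight_vector (q Q : C) (V : lmodType C) (M : UqModule q Q V)
    (lam : C) (u : nat -> C) (v0 : V) : Prop :=
  [/\ v0 != 0,
      (forall t, Xp M t v0 = 0),
      Kp M v0 = lam *: v0 &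
      (forall t, (0 < t)%N -> J M t v0 = u t *: v0)].

(* L(u): a simple module generated by a highest weight vector v0 of weight u
   (generation is automatic from simplicity since v0 != 0). *)
Definition is_L (q Q : C) (V : lmodType C) (M : UqModule q Q V)
    (lam : C) (u : nat -> C) (v0 : V) : Prop :=
  simple_module M /\ highest_weight_vector M lam u v0.

(* The coefficients Psi^+_t (t >= -1) acting on v; Psi^+(w) = sum_{t>=-1} Psi^+_t w^t,
   so the coefficient of w^t is 0 for t < -1. *)
Definition Psi (q Q : C) (V : lmodType C) (M : UqModule q Q V) (t : int) (v : V) : V :=
  match t with
  | Negz 0 => - (Q *: Kp M v)                                           (* t = -1 *)
  | Negz _ => 0                                                         (* t < -1 *)
  | Posz 0 => Kp M v - ((q - q^-1) * Q) *: Kp M (J M 1 v)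
  | Posz t => (q - q^-1) *: Kp M (J M t v - Q *: J M t.+1 v)
  end.

Definition nparts (k t : nat) (a : {ffun 'I_k -> 'I_t.+1}) : nat :=
  #|[pred i | (a i != 0 :> nat)]|.

(* p_t(q)(x_1..x_k) = sum_{lambda |- t, l(lambda) <= k} q^{-l}(q-q^{-1})^{l-1} m_lambda(x),
   with m_lambda written out as the sum of x^alpha over the distinct rearrangements
   alpha in N^k of lambda (padded by zeros); summing over all lambda this is the sum
   over all alpha in N^k with |alpha| = t, l(lambda) being the number of nonzero parts. *)
Definition p_t (q : C) (t : nat) (xs : seq C) : C :=
  \sum_(a : {ffun 'I_(size xs) -> 'I_t.+1} | (\sum_(i < size xs) (a i : nat) == t)%N)
     q ^- nparts a * (q - q^-1) ^+ (nparts a).-1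
       * \prod_(i < size xs) (nth 0 xs i) ^+ (a i : nat).

Definition beta_tilde (q beta : C) : C := (q - q^-1)^-1 * (1 - beta ^- 2).

Definition pQ_t (q Q beta : C) (t : nat) (xs : seq C) : C :=
  p_t q t xs + beta_tilde q beta * Q ^- t
  + (q - q^-1) * \sum_(1 <= z < t) beta_tilde q beta * Q ^- (t - z) * p_t q z xs.

(* For phi = beta (x - g_1)...(x - g_k), u^<Q>(phi) = (lam, (u_t)_{t>0}). *)
Definition uQ_lam (q beta : C) (gs : seq C) : C :=
  if size gs == 0%N then beta else beta * q ^+ size gs.

Definition uQ_u (q Q beta : C) (gs : seq C) (t : nat) : C :=
  if size gs == 0%N then beta_tilde q beta * Q ^- t else pQ_t q Q beta t gs.

Definition phiflat (gs : seq C) : {poly C} := \prod_(g <- gs) (1 - g *: 'X).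

Definition ps_mul (f g : nat -> C) (n : nat) : C :=
  \sum_(i < n.+1) f i * g (n - i)%N.

Fixpoint ps_inv_seq (f : nat -> C) (n : nat) : seq C :=
  match n with
  | 0 => [:: (f 0%N)^-1]
  | n'.+1 => let s := ps_inv_seq f n' in
             rcons s (- (f 0%N)^-1 * \sum_(1 <= i < n'.+2) f i * nth 0 s (n'.+1 - i))
  end.
Definition ps_inv (f : nat -> C) (n : nat) : C := nth 0 (ps_inv_seq f n) n.

Definition ps_of_poly (p : {poly C}) : nat -> C := fun n => p`_n.

(* quotient a(w)/b(w) of polynomials as a power series (b(0) != 0) *)
Definition ps_div_poly (a b : {poly C}) : nat -> C :=
  ps_mul (ps_of_poly a) (ps_inv (ps_of_poly b)).

(* Laurent series F(w) * (c0 + cm1 w^{-1}) for a power series F: coefficient of w^t *)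
Definition laurent_mul_shift (F : nat -> C) (c0 cm1 : C) (t : int) : C :=
  match t with
  | Posz n => c0 * F n + cm1 * F n.+1
  | Negz 0 => cm1 * F 0%N
  | Negz _ => 0
  end.

(* Main.v *)
Require Import Defs.
From mathcomp Require Import all_boot all_algebra.
From mathcomp Require Import complex Rstruct.
From mathcomp Require Import ring.
Import GRing.Theory.
Local Open Scope ring_scope.

Definition eqm (N : nat) (p r : {poly C}) := forall i, (i <= N)%N -> p`_i = r`_i.

Lemma eqmM N p p' r r' : eqm N p p' -> eqm N r r' -> eqm N (p * r) (p' * r').
Proof.
move=> hp hr i hi; rewrite !coefM; apply: eq_bigr => j _.
have h1 : (j <= N)%N by apply: leq_trans hi; rewrite -ltnS.
have h2 : (i - j <= N)%N by apply: leq_trans (leq_subr _ _) hi.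
by rewrite hp // hr.
Qed.

Lemma eqm_prod N k (F G : 'I_k -> {poly C}) :
  (forall i, eqm N (F i) (G i)) -> eqm N (\prod_(i < k) F i) (\prod_(i < k) G i).
Proof.
move=> h; apply: (big_ind2 (eqm N)) => //; last by move=> *; apply: eqmM.
Qed.

Lemma eqm_sym N p r : eqm N p r -> eqm N r p.
Proof. by move=> h i hi; rewrite h. Qed.

Lemma eqm_trans N p r s : eqm N p r -> eqm N r s -> eqm N p s.
Proof. by move=> h1 h2 i hi; rewrite h1 ?h2. Qed.

Lemma ps_inv_seq_size f n : size (ps_inv_seq f n) = n.+1.
Proof. by elim: n => //= n IH; rewrite size_rcons IH. Qed.

Lemma ps_inv_seq_nth f n j : (j <= n)%N -> nth 0 (ps_inv_seq f n) j = ps_inv f j.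
Proof.
elim: n j => [|n IH] j hj.
  by move: hj; rewrite leqn0 => /eqP ->.
rewrite leq_eqVlt in hj; case/orP: hj => [/eqP ->|hj] //.
rewrite /= nth_rcons ps_inv_seq_size hj; exact: IH.
Qed.

Lemma ps_invS f n : ps_inv f n.+1 =
  - (f 0%N)^-1 * \sum_(i < n.+1) f i.+1 * ps_inv f (n - i).
Proof.
rewrite /ps_inv /= nth_rcons ps_inv_seq_size ltnn eqxx.
congr (_ * _); rewrite big_add1 /= big_mkord; apply: eq_bigr => i _.
by rewrite subSS ps_inv_seq_nth // leq_subr.
Qed.

Lemma ps_inv_correct (b : {poly C}) N : b`_0 = 1 ->
  eqm N (b * \poly_(i < N.+1) ps_inv (ps_of_poly b) i) 1.
Proof.
move=> b0 m hm; rewrite coefM coef1; case: m hm => [|m] hm.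
  by rewrite big_ord1 coef_poly /= /ps_inv /= /ps_of_poly b0 invr1 mulr1.
rewrite big_ord_recl /= coef_poly ltnS hm ps_invS /ps_of_poly b0 invr1 mul1r mulN1r.
rewrite /=; apply/eqP; rewrite addrC subr_eq0; apply/eqP.

apply: eq_bigr => i _; rewrite coef_poly /bump /= add1n subSS.
by rewrite ifT // ltnS; apply: leq_trans (leq_subr _ _) _; apply: ltnW.
Qed.

Lemma ps_div_polyE (a b p : {poly C}) N n : b`_0 = 1 -> eqm N (b * p) a ->
  (n <= N)%N -> ps_div_poly a b n = p`_n.
Proof.
move=> b0 hbp hn.
set I := \poly_(i < N.+1) ps_inv (ps_of_poly b) i.
have -> : ps_div_poly a b n = (a * I)`_n.
  rewrite coefM /ps_div_poly /ps_mul; apply: eq_bigr => i _.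
  rewrite coef_poly ifT //; rewrite ltnS; exact: leq_trans (leq_subr _ _) hn.
have h1 : eqm N (a * I) (p * (b * I)).
  by rewrite mulrA [p * b]mulrC; apply: eqmM => //; apply: eqm_sym.
have h2 : eqm N (p * (b * I)) (p * 1) by apply: eqmM => //; exact: ps_inv_correct.
by rewrite h1 // h2 // mulr1.
Qed.

Section Comb.
Variable q : C.
Hypothesis hq0 : q != 0.
Let d := 1 - q ^- 2.
Definition cc (g : C) (j : nat) : C := if j == 0%N then 1 else (1 - q ^- 2) * g ^+ j.
Definition EE (g : C) (t : nat) : {poly C} := \poly_(j < t.+1) cc g j.
Definition PP (gs : seq C) (t : nat) : {poly C} :=
  \prod_(i < size gs) EE (nth 0 gs i) t.

Lemma coefPP gs t : (PP gs t)`_t =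
  \sum_(a : {ffun 'I_(size gs) -> 'I_t.+1} | (\sum_(i < size gs) (a i : nat) == t)%N)
     \prod_(i < size gs) cc (nth 0 gs i) (a i).
Proof.
rewrite /PP /EE; under eq_bigr do rewrite poly_def.
rewrite (_ : \prod_(i < size gs) \sum_(j < t.+1) cc gs`_i j *: 'X^j =
  \sum_(f : {ffun 'I_(size gs) -> 'I_t.+1}) \prod_(i < size gs) (cc gs`_i (f i) *: 'X^(f i))); last first.
  exact: bigA_distr_bigA.
rewrite coef_sum [RHS]big_mkcond; apply: eq_bigr => f _.
under eq_bigr do rewrite -mul_polyC.
rewrite big_split /= -rmorph_prod prodrXr coefCM coefXn eq_sym.
by case: eqP => _; rewrite ?mulr1 ?mulr0.
Qed.

Lemma p_tE gs t : (0 < t)%N -> (q - q^-1) * p_t q t gs = (PP gs t)`_t.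
Proof.
move=> t0; rewrite coefPP /p_t mulr_sumr; apply: eq_bigr => a ha.
have hnp : nparts a != 0%N.
  apply/eqP => h0; have hz := card0_eq h0.
  have hs : (\sum_(i < size gs) (a i : nat) = 0)%N.
    apply: big1 => i _; move: (hz i); rewrite !inE.
    by move/negbFE/eqP.
  by move: t0; move/eqP: ha => <-; rewrite hs.
have -> : \prod_(i < size gs) cc (nth 0 gs i) (a i) =
   \prod_(i < size gs) ((if (a i != 0 :> nat) then 1 - q ^- 2 else 1) * (nth 0 gs i) ^+ a i).
  by apply: eq_bigr => i _; rewrite /cc; case: eqP => [->|]; rewrite ?expr0 ?mulr1.
rewrite big_split /= -big_mkcond /= prodr_const.
have -> : #|(fun i : 'I_(size gs) => (a i : nat) != 0%N)| = nparts a by [].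
case: (nparts a) hnp => // l _.
rewrite mulrA; congr (_ * _).
rewrite [X in _ = X ^+ _](_ : _ = (q - q^-1) * q^-1); last first.
  by rewrite mulrBl mulfV // -expr2 exprVn.
rewrite exprMn exprVn exprS /= exprS; ring.
Qed.

Lemma EE_eqm g t : eqm t ((1 - g *: 'X) * EE g t) (1 - (g * q^-2) *: 'X).
Proof.
move=> j hj.
rewrite mulrBl mul1r coefB -scalerAl coefZ coefXM !coef_poly coefB coef1 coefZ coefX.
rewrite ltnS hj /cc.
case: j hj => [|[|j]] hj /=.
- by rewrite !mulr0 !subr0.
- rewrite expr1 !mulr1 mulrBl mul1r addrAC subrr !add0r.
  by congr (- _); rewrite mulrC.
- rewrite ifT; last by apply: ltnW.
  by rewrite mulr0 subr0 [g ^+ _.+2]exprS mulrCA subrr.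
Qed.

Lemma phiflat_ord gs : phiflat gs = \prod_(i < size gs) (1 - gs`_i *: 'X).
Proof. by rewrite /phiflat (big_nth 0) big_mkord. Qed.

Lemma phiflat_comp gs : phiflat gs \Po (q^-2 *: 'X) =
  \prod_(i < size gs) (1 - (gs`_i * q^-2) *: 'X).
Proof.
rewrite phiflat_ord (big_morph (comp_poly (q^-2 *: 'X)) (fun p r => comp_polyM p r _) (comp_polyC 1 _)).
apply: eq_bigr => i _.
by rewrite comp_polyB comp_polyC comp_polyZ comp_polyX scalerA mulrC.
Qed.

Lemma coef0_lin (k : nat) (G : 'I_k -> C) : (\prod_(i < k) (1 - G i *: 'X))`_0 = 1.
Proof.
apply: (big_ind (fun p : {poly C} => p`_0 = 1)).
- by rewrite coef1.
- by move=> x y hx hy; rewrite coef0M hx hy mulr1.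
- by move=> i _; rewrite coefB coef1 coefZ coefX mulr0 subr0.
Qed.

Lemma keyF gs t : (0 < t)%N -> (q - q^-1) * p_t q t gs =
  ps_div_poly (phiflat gs \Po (q^-2 *: 'X)) (phiflat gs) t.
Proof.
move=> t0; rewrite p_tE //; symmetry; apply: (@ps_div_polyE _ _ _ t) => //.
  by rewrite phiflat_ord coef0_lin.
rewrite phiflat_comp phiflat_ord /PP -big_split; apply: eqm_prod => i.
exact: EE_eqm.
Qed.

Lemma keyF0 gs : ps_div_poly (phiflat gs \Po (q^-2 *: 'X)) (phiflat gs) 0 = 1.
Proof.
rewrite (@ps_div_polyE _ _ 1 0) ?coef1 //.
  by rewrite phiflat_ord coef0_lin.
move=> i; rewrite leqn0 => /eqP ->.
by rewrite mulr1 phiflat_comp phiflat_ord !coef0_lin.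
Qed.
End Comb.

Lemma Sshift (Q b : C) (P : nat -> C) m : Q != 0 -> (1 <= m)%N ->
  \sum_(1 <= z < m.+1) b * Q ^- (m.+1 - z) * P z =
  Q^-1 * (\sum_(1 <= z < m) b * Q ^- (m - z) * P z + b * P m).
Proof.
move=> hQ hm; rewrite big_nat_recr //= subSnn expr1 mulrDr mulr_sumr.
congr (_ + _); last by rewrite mulrCA mulrA.
apply: eq_big_nat => z /andP[_ hz]; rewrite subSn ?(ltnW hz) // exprS invfM.
by rewrite -!mulrA mulrCA.
Qed.

Lemma p_t_nil q z : (0 < z)%N -> p_t q z [::] = 0.
Proof.
move=> hz; rewrite /p_t big_pred0 // => a /=.
by apply/negbTE; rewrite big_ord0 eq_sym -lt0n.
Qed.

Theorem mainTheorem8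
  (q Q : C) (hq0 : q != 0) (hq : forall n : nat, (0 < n)%N -> q ^+ n != 1)
  (hQ : Q != 0)
  (phi : {poly C}) (gs : seq C)
  (hphi0 : phi != 0)
  (hphi : phi = lead_coef phi *: \prod_(g <- gs) ('X - g%:P))
  (hphiQ : ~~ root phi ((lead_coef phi) ^- 2 * Q^-1))
  (V : lmodType C) (M : UqModule q Q V) (v0 : V)
  (hL : is_L M (uQ_lam q (lead_coef phi) gs) (uQ_u q Q (lead_coef phi) gs) v0) :
  forall t : int,
    Psi M t v0
    = (q ^+ (size phi).-1
       * laurent_mul_shift
           (ps_div_poly (phiflat gs \Po (q ^- 2 *: 'X)) (phiflat gs))
           (lead_coef phi)^-1 (- (Q * lead_coef phi)) t) *: v0.
Proof.
move=> t.
have hk : (size phi).-1 = size gs.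
  by rewrite {1}hphi size_scale ?lead_coef_eq0 // size_prod_XsubC.
rewrite hk.
move: hL; set beta := lead_coef phi => hL.
have hb : beta != 0 by rewrite lead_coef_eq0.
have he : q - q^-1 != 0.
  apply/eqP => h; move: (hq 2%N isT); rewrite expr2.
  by move/eqP: h; rewrite subr_eq0 => /eqP {2}->; rewrite mulfV // eqxx.
have hqq : q * q - 1 != 0.
  rewrite (_ : q * q - 1 = q * (q - q^-1)); first by rewrite mulf_neq0.
  by rewrite mulrBr mulfV.
case: hL => _ [_ hX hK hJ].
set F := ps_div_poly _ _.
have hF0 : F 0%N = 1 by exact: keyF0.
have hF : forall n, (0 < n)%N -> F n = (q - q^-1) * p_t q n gs.
  by move=> n hn; rewrite (keyF _ hq0).
have hu : forall n, (0 < n)%N -> uQ_u q Q beta gs n = pQ_t q Q beta n gs.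
  move=> n hn; rewrite /uQ_u; case: eqP => // /size0nil ->.
  rewrite /pQ_t p_t_nil // add0r big1_seq; first by rewrite mulr0 addr0.
  move=> z /andP[_]; rewrite mem_index_iota => /andP[hz _].
  by rewrite p_t_nil // mulr0.
have hlam : uQ_lam q beta gs = beta * q ^+ size gs.
  by rewrite /uQ_lam; case: eqP => [->|]; rewrite ?expr0 ?mulr1.
rewrite hlam in hK.
have hKs : forall a, Kp M (a *: v0) = (a * (beta * q ^+ size gs)) *: v0.
  by move=> a; rewrite linearZ_LR hK scalerA.
case: t => [[|n]|[|n]].
- rewrite /Psi /= hJ // hKs hK !scalerA -scalerBl; congr (_ *: _).
  rewrite hu // hF0 hF // /pQ_t big_geq // mulr0 addr0 expr1 /beta_tilde.
  field; by rewrite hq0 hb hQ hqq.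
- rewrite /Psi /= !hJ // scalerA -scalerBl hKs !scalerA; congr (_ *: _).
  rewrite !hu // !hF // /pQ_t (Sshift _ _ _ n.+1 hQ) // (exprS Q n.+1) invfM /beta_tilde.
  field; by rewrite hq0 hb hQ hqq expf_neq0.
- rewrite /Psi /= hK hF0 scalerA -scaleNr; congr (_ *: _).
  by rewrite mulr1; ring.
- by rewrite /Psi /= mulr0 scale0r.
Qed.
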